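(* Let $q$ be a prime, $n\ge 1$, and let $f:\mathbb{Z}_q^n\to\mathbb{C}$ be any function. Then $$\sum_{k=0}^n\frac{\widehat{A}_k[f]}{(q-1)^k\binom{n}{k}}=\frac{(n+1)(q-1)}{q^{1+n/2}}\sum_{m=0}^n\frac{A_m[f]}{m+1}\left(1-\frac{(-1)^{m+1}}{(q-1)^{m+1}}\right).$$
   Context: For $x=(x_1,\dots,x_n)\in\mathbb{Z}_q^n$ (identified with $GF(q)^n$), the weight ${\rm wt}(x)$ is the number of nonzero coordinates. The inner product is $(x,z)=\sum_i x_iz_i \bmod q$. The Fourier transform of $f$ is $\widehat{f}(z)=q^{-n/2}\sum_{x\in\mathbb{Z}_q^n}f(x)\,\omega^{(x,z)}$ with $\omega=e^{2\pi i/q}$. Define $A_k[f]=\sum_{z:\,{\rm wt}(z)=k}f(z)$ and $\widehat{A}_k[f]=\sum_{z:\,{\rm wt}(z)=k}\widehat{f}(z)$. *)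

(* Defs.v *)
From HB Require Import structures.
From mathcomp Require Import all_boot all_order all_algebra all_field.
From mathcomp Require Import reals trigo.
From mathcomp Require Import complex.
Set Implicit Arguments. Unset Strict Implicit. Unset Printing Implicit Defensive.
Import Order.TTheory GRing.Theory Num.Theory.
Local Open Scope ring_scope.
Local Open Scope complex_scope.

Notation Cplx R := (complex R).

Section Fourier.
Variables (R : realType) (q n : nat).

(* Vectors of Z_q^n, q prime, represented by 'F_q (= Z/qZ for prime q). *)
Definition vec := {ffun 'I_n -> 'F_q}.

Definition wt (x : vec) : nat := #|[set i | x i != 0]|.

Definition ip (x z : vec) : 'F_q := \sum_(i < n) x i * z i.

Definition omega : Cplx R :=
  (cos (2 * pi / q%:R) +i* sin (2 * pi / q%:R)).

Definition fhat (f : vec -> Cplx R) (z : vec) : Cplx R :=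
  ((Num.sqrt (q%:R ^+ n : R))^-1)%:C *
  \sum_(x : vec) f x * omega ^+ (nat_of_ord (ip x z)).

Definition Ak (f : vec -> Cplx R) (k : nat) : Cplx R :=
  \sum_(z : vec | wt z == k) f z.

Definition Ahatk (f : vec -> Cplx R) (k : nat) : Cplx R :=
  Ak (fhat f) k.

End Fourier.

(* Main.v *)
Require Import Defs.
From HB Require Import structures.
From mathcomp Require Import all_boot all_order all_algebra all_field.
From mathcomp Require Import reals trigo complex.
From mathcomp Require Import ring lra.
Import GRing.Theory Num.Theory.
Local Open Scope ring_scope.
Local Open Scope complex_scope.
Section S.
Variable R : realType.
Lemma cmul (a b c d : R) : (a +i* b) * (c +i* d) = (a*c - b*d) +i* (a*d + b*c).
Proof. by []. Qed.
Lemma omegaX (q k : nat) : omega R q ^+ k = cos (k%:R * (2 * pi / q%:R)) +i* sin (k%:R * (2 * pi / q%:R)).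
Proof.
elim: k => [|k IH]; first by rewrite expr0 !mul0r cos0 sin0.
rewrite exprS IH /omega cmul -cosD [X in _ +i* X]addrC -sinD.
by rewrite -[k.+1]addn1 natrD [in RHS]mulrDl mul1r [_ + k%:R * _]addrC.
Qed.
Lemma omegaq (q : nat) : (0 < q)%N -> omega R q ^+ q = 1.
Proof.
move=> q0; rewrite omegaX mulrCA mulfV ?pnatr_eq0 -?lt0n // mulr1.
by rewrite mulr_natl cos2pi sin2pi.
Qed.
Lemma omega_neq1 (q : nat) : (1 < q)%N -> omega R q != 1.
Proof.
move=> q1; apply/eqP => h.
have hr := congr1 (@complex.Re R) h; have hi := congr1 (@complex.Im R) h.
rewrite /= in hr hi.
have q0 : (0 : R) < q%:R by rewrite ltr0n; apply: ltn_trans q1.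
case: (ltngtP q 2) => [|q2|q2].
- by rewrite ltnS leqNgt q1.
- have : 0 < sin (2 * pi / q%:R :> R).
    apply: sin_gt0_pi; apply/andP; split.
      by rewrite divr_gt0 // mulr_gt0 // pi_gt0.
    rewrite ltr_pdivrMr // mulrC ltr_pM2l ?pi_gt0 //.
    by rewrite ltr_nat.
  by rewrite hi Order.POrderTheory.ltxx.
- move: hr; rewrite q2 mulrAC mulfV ?pnatr_eq0 // mul1r cospi => /eqP.
  by rewrite -subr_eq0 -opprD oppr_eq0 (_ : 1 + 1 = 2%:R) // pnatr_eq0.
Qed.

Variables (q : nat) (qP : prime q).
Let C := Cplx R.
Definition ee (a : 'F_q) : C := omega R q ^+ (nat_of_ord a).
Lemma q1 : (1 < q)%N. Proof. exact: prime_gt1. Qed.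
Lemma omq : omega R q ^+ (Zp_trunc (pdiv q)).+2 = 1.
Proof. by rewrite Fp_cast // omegaq // ltnW // q1. Qed.
Lemma eeD a b : ee (a + b) = ee a * ee b.
Proof. by rewrite /ee -exprD -[in RHS](expr_mod _ omq). Qed.
Lemma ee0 : ee 0 = 1.
Proof. by rewrite /ee expr0. Qed.
Lemma sum_ee : \sum_(a : 'F_q) ee a = 0.
Proof.
have := subrX1 (omega R q) (Zp_trunc (pdiv q)).+2.
rewrite omq subrr => /esym /eqP; rewrite mulf_eq0 subr_eq0 (negbTE (@omega_neq1 q q1)) /=.
by move/eqP.
Qed.
Lemma sum_eeM c : c != 0 -> \sum_(a : 'F_q) ee (c * a) = 0.
Proof.
move=> c0; rewrite -[RHS]sum_ee; by rewrite [RHS](reindex_inj (mulfI c0)).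
Qed.

Lemma natS_neq0 (k : nat) : 1 + k%:R != 0 :> C.
Proof. by rewrite nat1r pnatr_eq0. Qed.
Definition Lp (p : {poly C}) : C := \sum_(i < size p) p`_i / (i.+1)%:R.
Lemma LpE N (p : {poly C}) : (size p <= N)%N -> Lp p = \sum_(i < N) p`_i / (i.+1)%:R.
Proof.
move=> h; rewrite /Lp (big_ord_widen N (fun i => p`_i / (i.+1)%:R) h) big_mkcond.
apply: eq_bigr => i _; case: ltnP => // hi.
by rewrite nth_default // mul0r.
Qed.
Lemma LpD (p r : {poly C}) : Lp (p + r) = Lp p + Lp r.
Proof.
pose N := maxn (size p) (size r).
rewrite !(LpE N) ?leq_maxl ?leq_maxr ?(leq_trans (size_add _ _)) // -big_split.
by apply: eq_bigr => i _; rewrite coefD mulrDl.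
Qed.
Lemma LpZ a (p : {poly C}) : Lp (a *: p) = a * Lp p.
Proof.
rewrite (LpE (size p)) ?size_scale_leq // /Lp mulr_sumr.
by apply: eq_bigr => i _; rewrite coefZ mulrA.
Qed.
Lemma Lp0 : Lp 0 = 0.
Proof. by rewrite /Lp size_poly0 big_ord0. Qed.
Lemma LpN (p : {poly C}) : Lp (- p) = - Lp p.
Proof. by rewrite -scaleN1r LpZ mulN1r. Qed.
Lemma Lp_sum (I : finType) (F : I -> {poly C}) : Lp (\sum_i F i) = \sum_i Lp (F i).
Proof. exact: (big_morph Lp LpD Lp0). Qed.
Lemma LpXn k : Lp 'X^k = 1 / (k.+1)%:R.
Proof.
rewrite (LpE k.+1) ?size_polyXn // big_ord_recr /= coefXn eqxx big1 ?add0r //.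
by move=> i _; rewrite coefXn (ltn_eqF (ltn_ord i)) mul0r.
Qed.
Lemma beta a b : Lp ('X^a * (1 - 'X) ^+ b) = (a`! * b`!)%:R / ((a + b).+1)`!%:R.
Proof.
elim: b a => [|b IH] a.
  rewrite expr0 mulr1 LpXn addn0 fact0 muln1 factS natrM.
  by field; rewrite ?nat1r !pnatr_eq0 -?lt0n ?fact_gt0.
have -> : ('X^a * (1 - 'X) ^+ b.+1 : {poly C}) = 'X^a * (1 - 'X) ^+ b - 'X^(a.+1) * (1 - 'X) ^+ b.
  by rewrite exprS exprS mulrBl mul1r mulrBr mulrA [_ * 'X]mulrC -exprS.
rewrite LpD LpN IH IH addnS addSn !factS !natrM.
by field; rewrite -!natrD -[X in X + _ != 0]/(1%:R) -natrD !pnatr_eq0 -lt0n fact_gt0 !addn_eq0.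
Qed.

Lemma Lp_binom m (y : C) : y != 0 ->
  Lp ((1 + y *: 'X) ^+ m) = ((1 + y) ^+ m.+1 - 1) / (y * m.+1%:R).
Proof.
move=> y0.
have m0 : (m.+1)%:R != 0 :> C by rewrite pnatr_eq0.
rewrite addrC exprD1n Lp_sum.
under eq_bigr => i _ do rewrite exprZn -scaler_nat scalerA LpZ LpXn.
apply: (mulfI (mulf_neq0 y0 m0)); rewrite mulrCA mulfV ?mulf_neq0 // mulr1.
rewrite [1 + y]addrC exprD1n [in RHS]big_ord_recl /= expr0 bin0 mulr1n [in RHS]addrC addKr mulr_sumr.
apply: eq_bigr => i _.
have := mul_bin_diag m.+1 i; rewrite /= => /(congr1 (fun k => k%:R : C)).
rewrite !natrM => h.
have h' : 'C(m.+1, i.+1)%:R = m.+1%:R * 'C(m, i)%:R / i.+1%:R :> C.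
  by rewrite h mulrAC mulfV ?mul1r // pnatr_eq0.
rewrite /bump /= add1n exprS -[RHS]mulr_natr h'.
by field; apply: natS_neq0.
Qed.

Variable n : nat.
Let Q : C := (q.-1)%:R.
Let c0 : C := Q^-1.
Lemma Q0 : Q != 0.
Proof. by rewrite /Q pnatr_eq0 -lt0n -ltnS prednK ?q1 // ltnW // q1. Qed.
Definition hh (a : 'F_q) : {poly C} := if a == 0 then 1 - 'X else c0 *: 'X.
Definition PP (z : vec q n) : {poly C} := \prod_i hh (z i).
Lemma PP_eq z : PP z = c0 ^+ wt z *: ('X^(wt z) * (1 - 'X) ^+ (n - wt z)).
Proof.
rewrite /PP (bigID (fun i => z i == 0)) /= mulrC.
rewrite (eq_bigr (fun _ => c0 *: 'X)); last by move=> i /negbTE; rewrite /hh => ->.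
rewrite [X in _ * X](eq_bigr (fun _ => 1 - 'X)); last by move=> i; rewrite /hh => ->.
rewrite !prodr_const exprZn -scalerAl.
have hw : #|(fun i => z i != 0)| = wt z by rewrite /wt cardsE.
have hc : #|(fun i => z i == 0)| = (n - wt z)%N.
  rewrite -hw -[X in (X - _)%N](card_ord n) -(cardC (fun i => z i != 0)) addKn.
  by apply: eq_card => i; rewrite !inE negbK.
by rewrite hw hc.
Qed.

Lemma ee_ip (x z : vec q n) : ee (ip x z) = \prod_i ee (x i * z i).
Proof. by rewrite /ip; apply: (big_morph ee eeD ee0). Qed.
Let yy : C := - (1 + c0).
Lemma factor (c : 'F_q) :
  \sum_(a : 'F_q) (ee (c * a))%:P * hh a = if c == 0 then 1 else 1 + yy *: 'X.
Proof.
rewrite (bigD1 0) //= /hh eqxx mulr0 ee0 mul1r.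
rewrite (eq_bigr (fun a => (ee (c*a))%:P * (c0 *: 'X))); last by move=> a /negbTE ->.
rewrite -big_distrl /= -(rmorph_sum polyC).
have -> : \sum_(a | a != 0) ee (c*a) = (if c == 0 then Q else -1).
  case: eqP => [->|/eqP cn0].
    under eq_bigr do rewrite mul0r ee0.
    by rewrite sumr_const cardC1 card_Fp.
  have := @sum_eeM c cn0; rewrite (bigD1 0) //= mulr0 ee0 => /eqP.
  by rewrite addrC addr_eq0 => /eqP.
case: eqP => _.
  by rewrite mul_polyC scalerA mulfV ?Q0 // scale1r subrK.
by rewrite mul_polyC scaleN1r /yy scaleNr scalerDl scale1r opprD addrA.
Qed.

Lemma kraw (x : vec q n) : \sum_z ee (ip x z) *: PP z = (1 + yy *: 'X) ^+ wt x.
Proof.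
transitivity (\sum_(z : vec q n) \prod_i ((ee (x i * z i))%:P * hh (z i))).
  apply: eq_bigr => z _.
  by rewrite ee_ip -mul_polyC rmorph_prod -big_split.
rewrite /vec -(bigA_distr_bigA (fun i (a : 'F_q) => (ee (x i * a))%:P * hh a)) /=.
under eq_bigr do rewrite factor.
rewrite (bigID (fun i => x i == 0)) /= big1; last by move=> i ->.
rewrite mul1r (eq_bigr (fun _ => 1 + yy *: 'X)); last by move=> i /negbTE ->.
by rewrite prodr_const /wt cardsE.
Qed.

Definition WW k : C := 1 / (Q ^+ k * ('C(n, k))%:R).
Lemma wt_le (z : vec q n) : (wt z <= n)%N.
Proof. by rewrite /wt; apply: leq_trans (max_card _) _; rewrite card_ord. Qed.
Lemma WW_Lp z : WW (wt z) = n.+1%:R * Lp (PP z).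
Proof.
have kn := wt_le z.
rewrite PP_eq LpZ beta subnKC // factS -(bin_fact kn) /WW /c0 exprVn !natrM.
have := bin_gt0 n (wt z); rewrite kn lt0n -(pnatr_eq0 C) => hb.
have hf1 : (wt z)`!%:R != 0 :> C by rewrite pnatr_eq0 -lt0n fact_gt0.
have hf2 : (n - wt z)`!%:R != 0 :> C by rewrite pnatr_eq0 -lt0n fact_gt0.
have hQ : Q ^+ wt z != 0 by rewrite expf_neq0 // Q0.
by field; rewrite hf2 hf1 hb hQ andbT; apply: natS_neq0.
Qed.

Lemma hq : q%:R = Q + 1 :> C.
Proof. by rewrite /Q natr1 prednK // ltnW // q1. Qed.
Lemma qn0 : q%:R != 0 :> C.
Proof. by rewrite pnatr_eq0 -lt0n ltnW // q1. Qed.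
Definition GG (m : nat) : C :=
  (n.+1 * q.-1)%:R / q%:R * (1 / (m.+1)%:R * (1 - (-1) ^+ m.+1 / Q ^+ m.+1)).
Lemma Sx (x : vec q n) : \sum_z ee (ip x z) * WW (wt z) = GG (wt x).
Proof.
under eq_bigr do rewrite WW_Lp mulrCA -LpZ.
rewrite -mulr_sumr -Lp_sum kraw.
have yy0 : yy != 0.
  rewrite /yy oppr_eq0 /c0; apply/eqP => h.
  have : (1 + Q^-1) * Q = 0 by rewrite h mul0r.
  by rewrite mulrDl mul1r mulVf ?Q0 // -hq; apply/eqP; rewrite qn0.
rewrite Lp_binom // /GG /yy /c0.
have -> : 1 - (1 + Q^-1) = - Q^-1 by rewrite opprD addrA subrr add0r.
rewrite -[- Q^-1]mulN1r exprMn exprVn natrM.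
have hQ := Q0.
have hm : (wt x).+1%:R != 0 :> C by rewrite pnatr_eq0.
have hQm : Q ^+ (wt x).+1 != 0 by rewrite expf_neq0.
rewrite hq.
field; apply/and4P; split => //; first exact: natS_neq0.
by have := qn0; rewrite hq.
Qed.

Lemma sum_by_wt (F : vec q n -> nat -> C) :
  \sum_(k < n.+1) \sum_(z | wt z == k) F z k = \sum_z F z (wt z).
Proof.
rewrite (exchange_big_dep xpredT) //=; apply: eq_bigr => z _.
rewrite (big_pred1 (inord (wt z) : 'I_n.+1)) ?inordK ?ltnS ?wt_le //.
move=> k /=; rewrite -val_eqE /= inordK ?ltnS ?wt_le // eq_sym.
Qed.
Lemma main (f : vec q n -> C) :
  \sum_(k < n.+1)
     Ahatk f k / ((q.-1)%:R ^+ k * ('C(n, k))%:R)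
  = ((n.+1 * q.-1)%:R / (q%:R * (Num.sqrt (q%:R ^+ n : R))%:C)) *
    \sum_(m < n.+1)
      Ak f m / (m.+1)%:R *
      (1 - (-1) ^+ m.+1 / (q.-1)%:R ^+ m.+1).
Proof.
transitivity (\sum_(k < n.+1) \sum_(z | wt z == k) fhat f z * WW k).
  by apply: eq_bigr => k _; rewrite /Ahatk /Ak mulr_suml /WW div1r.
rewrite (sum_by_wt (fun z k => fhat f z * WW k)).
under eq_bigr do rewrite /fhat -mulrA mulr_suml.
rewrite -mulr_sumr exchange_big /=.
transitivity (((Num.sqrt (q%:R ^+ n : R))^-1)%:C * \sum_x f x * GG (wt x)).
  congr (_ * _); apply: eq_bigr => x _; rewrite -Sx mulr_sumr.
  by apply: eq_bigr => z _; rewrite mulrA.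
rewrite /Ak; under [in RHS]eq_bigr do rewrite !mulr_suml.
rewrite (sum_by_wt (fun x m => f x / m.+1%:R * (1 - (-1) ^+ m.+1 / Q ^+ m.+1))).
rewrite !mulr_sumr; apply: eq_bigr => x _.
have hs : (Num.sqrt (q%:R ^+ n : R))%:C != 0.
  rewrite (inj_eq (@complexI R)) sqrtr_eq0 -Order.TotalTheory.ltNge exprn_gt0 // ltr0n ltnW // q1 //.
rewrite (fmorphV (real_complex R)) /GG natrM.
have hm : (wt x).+1%:R != 0 :> C by rewrite pnatr_eq0.
have h2 := qn0.
field; apply/and4P; split => //; last exact: natS_neq0.
by rewrite expf_neq0 // Q0.
Qed.
End S.

Theorem lemma1 (R : realType) (q n : nat) (f : vec q n -> Cplx R) :
  prime q -> (1 <= n)%N ->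
  \sum_(k < n.+1)
     Ahatk f k / ((q.-1)%:R ^+ k * ('C(n, k))%:R)
  = ((n.+1 * q.-1)%:R / (q%:R * (Num.sqrt (q%:R ^+ n : R))%:C)) *
    \sum_(m < n.+1)
      Ak f m / (m.+1)%:R *
      (1 - (-1) ^+ m.+1 / (q.-1)%:R ^+ m.+1).

Proof. move=> qP _; exact: (@main R q qP n f). Qed.
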